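(* Let $p$ be a prime and $n\ge 2$ an integer. Then, modulo $p$, \[ \sum_{j=1}^{p-1}\zeta_{n,2}(jx,x)\equiv\begin{cases}-x^n=-\zeta_{n,1}(x) & \text{if } n=p^i \text{ for some } i\ge1,\\ 0&\text{otherwise.}\end{cases} \]
   Context: For integers $n,k\ge1$, $\zeta_{n,k}(x_1,\dots,x_k)=\phi(n,k)^{-1}\sum_{\lambda}\frac{n!}{\lambda_1!\cdots\lambda_k!}x_1^{\lambda_1}\cdots x_k^{\lambda_k}$, the sum over $k$-tuples $\lambda$ of positive integers with sum $n$, and $\phi(n,k)=\gcd_\lambda\frac{n!}{\lambda_1!\cdots\lambda_k!}$ over the same tuples; this is an integral polynomial. In particular $\zeta_{n,2}(x,y)=\phi(n,2)^{-1}\big((x+y)^n-x^n-y^n\big)$ and $\zeta_{n,1}(x)=x^n$. The sum $\sum_{j}\zeta_{n,2}(jx,x)$ is the additive half-Weil form associated to $\zeta_{n,2}$. *)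

(* Defs.v *)
From mathcomp Require Import all_boot all_order all_algebra.
Set Implicit Arguments. Unset Strict Implicit. Unset Printing Implicit Defensive.
Import Order.TTheory GRing.Theory Num.Theory.
Local Open Scope ring_scope.

(* phi(n,2) = gcd over pairs (l1,l2) of positive integers with l1+l2 = n of
   n!/(l1! l2!); with l1 = k, l2 = n - k, 1 <= k < n. *)
Definition phi2 (n : nat) : nat :=
  \big[gcdn/0%N]_(1 <= k < n) (n`! %/ (k`! * (n - k)`!))%N.

(* zeta_{n,2}(a,b) = phi(n,2)^{-1} sum_{l1+l2=n, l_i>=1} n!/(l1! l2!) a^l1 b^l2,
   evaluated in an arbitrary commutative ring (the integer coefficients
   n!/(l1!l2!)/phi(n,2) are mapped into the ring). *)
Definition zeta2 (R : comPzRingType) (n : nat) (a b : R) : R :=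
  \sum_(1 <= k < n)
     ((n`! %/ (k`! * (n - k)`!)) %/ phi2 n)%N%:R * a ^+ k * b ^+ (n - k).

Definition zeta1 (R : comPzRingType) (n : nat) (a : R) : R := a ^+ n.

Definition polycongr (p : nat) (P Q : {poly int}) : Prop :=
  forall i : nat, (p%:Z %| (P - Q)`_i)%Z.

(* Main.v *)
Require Import Defs.
From mathcomp Require Import all_boot all_order all_algebra zify.
Import Order.TTheory GRing.Theory Num.Theory.
Local Open Scope ring_scope.

Section Fp.
Variable p : nat.
Hypothesis hp : prime p.

Lemma charFpX : p \in [pchar {poly 'F_p}].
Proof. by rewrite (pchar_lalg ({poly 'F_p})) pchar_Fp. Qed.

Lemma coef_binom n k : (('X + 1) ^+ n : {poly 'F_p})`_k = ('C(n, k))%:R.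
Proof.
rewrite exprD1n coef_sum.
have [lt|ge] := ltnP k n.+1.
  rewrite (bigD1 (Ordinal lt)) //= coefMn coefXn eqxx big1 ?addr0.
    by rewrite mulr1n.
  move=> i /eqP ne; rewrite coefMn coefXn.
  case: eqP => [e|]; last by rewrite mul0rn.
  by case: ne; apply: val_inj; rewrite /= e.
rewrite big1 ?bin_small //.
move=> i _; rewrite coefMn coefXn; case: eqP => [e|]; last by rewrite mul0rn.
by move: (ltn_ord i); rewrite -e ltnNge ge.
Qed.

Lemma dvd_binom n k : (p %| 'C(n, k))%N = ((('X + 1) ^+ n : {poly 'F_p})`_k == 0).
Proof. by rewrite coef_binom (dvdn_pcharf (pchar_Fp hp)). Qed.

Lemma midA i k : (0 < k < p ^ i)%N -> (p %| 'C(p ^ i, k))%N.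
Proof.
move=> /andP[k0 kl]; rewrite dvd_binom exprDn_pchar.
  by rewrite expr1n coefD coefXn coefC (ltn_eqF kl) (gtn_eqF k0) /= addr0.
by rewrite (eq_pnat _ (pcharf_eq charFpX)) pnatX pnat_id.
Qed.


Lemma comp_pow m : ((('X + 1) ^+ m : {poly 'F_p}) \Po 'X^p) = ('X^p + 1) ^+ m.
Proof.
elim: m => [|m IH]; first by rewrite !expr0 comp_polyC.
by rewrite !exprS comp_polyM IH comp_polyD comp_polyX comp_polyC.
Qed.

Lemma binom_lucas m k : ((('X + 1) ^+ (m * p) : {poly 'F_p}))`_(k * p) = (('X + 1) ^+ m : {poly 'F_p})`_k.
Proof.
have p0 := prime_gt0 hp.
rewrite mulnC exprM exprDn_pchar; last first.
  by rewrite (eq_pnat _ (pcharf_eq charFpX)) pnat_id.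
rewrite expr1n -comp_pow coef_comp_poly_Xn // dvdn_mull // mulnK //.
Qed.

Lemma midB n : (2 <= n)%N -> (forall k, (0 < k < n)%N -> (p %| 'C(n, k))%N) ->
  exists i, (1 <= i)%N /\ n = (p ^ i)%N.
Proof.
have p1 := prime_gt1 hp.
move=> hn0 H0; suff: forall N n, (n <= N)%N -> (2 <= n)%N -> (forall k, (0 < k < n)%N -> (p %| 'C(n, k))%N) ->
  exists i, (1 <= i)%N /\ n = (p ^ i)%N by move=> /(_ n n (leqnn n) hn0 H0).
clear hn0 H0; move: n => _.
move=> N; elim: N => [|N IH] n hN hn H; first by move: hN; rewrite leqn0 => /eqP e; rewrite e in hn.
have : (p %| n)%N by rewrite -(bin1 n) H //; lia.
case/dvdnP => m hm.
have [m1|m2] := leqP m 1.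
  have e1 : m = 1%N by move: hm hn m1; case: m => [|[|]] // ->.
  by exists 1%N; split => //; rewrite hm e1 mul1n expn1.
have [i [i1 hmi]] : exists i, (1 <= i)%N /\ m = (p ^ i)%N.
  apply: (IH m) => //.
    rewrite hm in hN; nia.
  move=> k hk.
  rewrite dvd_binom -binom_lucas -hm -dvd_binom; apply: H.
  rewrite hm; apply/andP; split; first by rewrite muln_gt0; lia.
  by rewrite ltn_mul2r; lia.
by exists i.+1; split => //; rewrite hm hmi expnSr.
Qed.

End Fp.

Definition tt n k := (n`! %/ (k`! * (n - k)`!))%N.

Lemma phi_dvd n k : (1 <= k < n)%N -> (phi2 n %| tt n k)%N.
Proof.
move=> hk; rewrite /phi2 (bigD1_seq k) /= ?mem_index_iota ?iota_uniq //.
exact: dvdn_gcdl.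
Qed.

Lemma dvd_phi d n : (forall k, (1 <= k < n)%N -> (d %| tt n k)%N) -> (d %| phi2 n)%N.
Proof.
move=> H; rewrite /phi2 big_seq_cond; apply: (big_ind (fun x => d %| x)%N) => //.
  by move=> x y hx hy; rewrite dvdn_gcd hx hy.
by move=> k /andP[]; rewrite mem_index_iota => /H.
Qed.

Lemma S_eq (p n : nat) : (2 <= n)%N ->
  \sum_(1 <= j < p) zeta2 n (j%:R * 'X) ('X : {poly int}) =
  'X^n *+ (\sum_(1 <= j < p) \sum_(1 <= k < n) (tt n k %/ phi2 n) * j ^ k)%N.
Proof.
move=> hn; rewrite -sumrMnr; apply: eq_bigr => j _.
rewrite /zeta2 -sumrMnr big_nat_cond [RHS]big_nat_cond; apply: eq_bigr => k /andP[/andP[k1 kn] _].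
rewrite exprMn -natrX mulrA -natrM -mulrA -exprD subnKC; last by lia.
by rewrite mulr_natl.
Qed.

Lemma sum_tele (p n : nat) : (1 <= p)%N ->
  (1 + \sum_(1 <= j < p) (j + 1) ^ n = \sum_(1 <= j < p) j ^ n + p ^ n)%N.
Proof.
elim: p => [|p IH] // hp.
case: p IH hp => [|p] IH hp; first by rewrite !big_geq // exp1n.
rewrite [in LHS]big_nat_recr // [in RHS]big_nat_recr //= addn1.
have := IH isT. lia.
Qed.

Lemma key (p n : nat) : (2 <= n)%N -> (1 <= p)%N ->
  (phi2 n * (\sum_(1 <= j < p) \sum_(1 <= k < n) (tt n k %/ phi2 n) * j ^ k) + p = p ^ n)%N.
Proof.
move=> hn hp.
have E : forall j, (\sum_(1 <= k < n) tt n k * j ^ k + 1 + j ^ n = (j + 1) ^ n)%N.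
  move=> j.
  have B : ((1 + j) ^ n = \sum_(0 <= k < n.+1) 'C(n, k) * j ^ k)%N.
    by rewrite expnDn big_mkord; apply: eq_bigr => i _; rewrite exp1n mul1n.
  have -> : (\sum_(1 <= k < n) tt n k * j ^ k = \sum_(1 <= k < n) 'C(n, k) * j ^ k)%N.
    by apply: eq_big_nat => k hk; rewrite /tt bin_factd //; lia.
  rewrite [in RHS]addnC B big_nat_recr //= [in RHS]big_ltn //; last lia.
  rewrite binn bin0 expn0 muln1 mul1n; lia.
have -> : (phi2 n * (\sum_(1 <= j < p) \sum_(1 <= k < n) (tt n k %/ phi2 n) * j ^ k) =
    \sum_(1 <= j < p) \sum_(1 <= k < n) tt n k * j ^ k)%N.
  rewrite big_distrr; apply: eq_bigr => j _; rewrite big_distrr.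
  apply: eq_big_nat => k hk; rewrite -[LHS]/(phi2 n * (tt n k %/ phi2 n * j ^ k))%N mulnA [(phi2 n * _)%N]mulnC divnK // phi_dvd //.
have F : (\sum_(1 <= j < p) (\sum_(1 <= k < n) tt n k * j ^ k + 1 + j ^ n) = \sum_(1 <= j < p) (j + 1) ^ n)%N.
  by apply: eq_bigr => j _; exact: E.
rewrite !big_split /= sum_nat_const_nat in F.
have := @sum_tele p n hp; lia.
Qed.

Lemma pc (p n c : nat) : (p %| c)%N -> forall i, (p%:Z %| ('X^n *+ c : {poly int})`_i)%Z.
Proof.
move=> h i; rewrite coefMn coefXn; case: (i == n); last by rewrite mul0rn dvdz0.
by rewrite mulr1n natz.
Qed.

Lemma tt_bin n k : (0 < n)%N -> tt n k = 'C(n, k).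
Proof. by move=> n0; rewrite /tt bin_factd. Qed.

Theorem mainTheorem9 (p n : nat) (hp : prime p) (hn : (2 <= n)%N) :
  let S := \sum_(1 <= j < p) zeta2 n (j%:R * 'X) ('X : {poly int}) in
  ((exists i : nat, (1 <= i)%N /\ n = (p ^ i)%N) ->
      polycongr p S (- zeta1 n ('X : {poly int}))) /\
  (~ (exists i : nat, (1 <= i)%N /\ n = (p ^ i)%N) ->
      polycongr p S 0).
Proof.
move=> S; rewrite /S S_eq //.
set coef := (\sum_(1 <= j < p) _)%N.
have K : (phi2 n * coef + p = p ^ n)%N by apply: key => //; exact: prime_gt0.
have p1 := prime_gt1 hp.
have n0 : (0 < n)%N by lia.
split.
  move=> [i [i1 ni]].
  have pphi : (p %| phi2 n)%N.
    apply: dvd_phi => k hk; rewrite tt_bin // ni; apply: midA => //; rewrite -ni; lia.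
  have phin : (phi2 n %| p ^ i)%N.
    by rewrite -ni; have := @phi_dvd n 1; rewrite tt_bin // bin1; apply; lia.
  have [e ei ee] := (dvdn_pfactor _ _ hp) phin.
  have e1 : e = 1%N.
    have [e0|e2] := leqP e 1.
      by move: pphi; rewrite ee; case: (e) e0 => [|[]] //; rewrite expn0 dvdn1 => _ /eqP; lia.
    have : (p ^ 2 %| p)%N.
      have h1 : (p ^ 2 %| phi2 n * coef)%N by rewrite ee dvdn_mulr // dvdn_exp2l.
      rewrite -(dvdn_addr _ h1) K dvdn_exp2l //.
    move/(dvdn_leq (prime_gt0 hp)); rewrite expnS expn1 => h.
    have : (p * 2 <= p * p)%N by rewrite leq_mul2l; lia.
    lia.
  have hc : (p %| coef + 1)%N.
    have : (p * (coef + 1) = p * p ^ n.-1)%N.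
      rewrite -expnS prednK // -K ee e1 expn1; lia.
    move/eqP; rewrite eqn_mul2l; move: p1; case: (p) => //= p' _ /eqP ->.
    by rewrite dvdn_exp //; lia.
  move=> i0; rewrite /zeta1 opprK -mulrSr -addn1.
  exact: pc.
move=> np.
have nphi : ~~ (p %| phi2 n)%N.
  apply/negP => pphi; apply: np; apply: midB => // k hk.
  by rewrite -tt_bin // (dvdn_trans pphi) // phi_dvd.
have : (p %| phi2 n * coef)%N.
  have : (p %| p ^ n)%N by rewrite dvdn_exp //; lia.
  by rewrite -K dvdn_addl ?dvdnn.
rewrite Gauss_dvdr; last by rewrite prime_coprime.
move=> hc i; rewrite subr0; exact: pc.
Qed.
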